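(* Let $G=(V,E)$ be an undirected graph with $m$ edges and positive capacities $u_e$, let $0<\epsilon<1/7$, $\rho>0$, $F>0$, and let $w\in\mathbb{R}_{>0}^E$ with $\mu=\sum_e w_e$. Set $r_e=w_e/u_e^2$ and suppose $R_{\mathrm{eff}}(r)\le(1-7\epsilon)\mu/F^2$. Let $\tilde f$ be an $s$-$t$ flow of value $F$ with $\mathcal{E}_r(\tilde f)\le(1+\epsilon^2)F^2R_{\mathrm{eff}}(r)$. Define $w'_e=w_e+\frac{\epsilon}{\rho}\,\mathrm{cong}_{\tilde f}(e)\,w_e+\frac{\epsilon^2}{m\rho}\mu$ and $\mu'=\sum_e w'_e$. Then $\mu'\le\mu\exp\!\big(\frac{\epsilon(1-2\epsilon)}{\rho}\big)$.
   Context: Edges are arbitrarily oriented; an $s$-$t$ flow is $f:E\to\mathbb{R}$ conserving flow at all vertices other than $s,t$, with value the net flow out of $s$. $\mathrm{cong}_f(e)=|f(e)|/u_e$. $\mathcal{E}_r(f)=\sum_e r_e f(e)^2$. The effective $s$-$t$ resistance $R_{\mathrm{eff}}(r)$ is the minimum of $\mathcal{E}_r$ over $s$-$t$ flows of value $1$, so the electrical flow of value $F$ has energy $F^2R_{\mathrm{eff}}(r)$. *)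

(* Defs.v *)
From Stdlib Require Import Reals List.
Import ListNotations.
Open Scope R_scope.

(* A finite undirected multigraph with vertices 0..n-1 and edges 0..m-1;
   edge i is (arbitrarily) oriented from [tl i] to [hd i]. *)

Definition sumE (m : nat) (g : nat -> R) : R :=
  fold_right Rplus 0 (map g (seq 0 m)).

Definition netout (m : nat) (tl hd : nat -> nat) (f : nat -> R) (v : nat) : R :=
  sumE m (fun i => (if Nat.eqb (tl i) v then f i else 0)
                 - (if Nat.eqb (hd i) v then f i else 0)).

Definition is_st_flow (n m : nat) (tl hd : nat -> nat) (s t : nat)
    (f : nat -> R) (F : R) : Prop :=
  (forall v, (v < n)%nat -> v <> s -> v <> t -> netout m tl hd f v = 0) /\
  netout m tl hd f s = F.

Definition energy (m : nat) (r f : nat -> R) : R :=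
  sumE m (fun i => r i * (f i)^2).

Definition cong (u f : nat -> R) (i : nat) : R := Rabs (f i) / u i.

Definition is_Reff (n m : nat) (tl hd : nat -> nat) (s t : nat)
    (r : nat -> R) (Reff : R) : Prop :=
  (exists f, is_st_flow n m tl hd s t f 1 /\ energy m r f = Reff) /\
  (forall f, is_st_flow n m tl hd s t f 1 -> Reff <= energy m r f).

(* Main.v *)
Require Import Defs.
From Stdlib Require Import Reals List Lra Lia Psatz.
Open Scope R_scope.

Lemma sumL_le (l : list nat) (f g : nat -> R) :
  (forall i, In i l -> f i <= g i) ->
  fold_right Rplus 0 (map f l) <= fold_right Rplus 0 (map g l).
Proof.
  induction l as [|a l IH]; simpl; intros H; [lra|].
  assert (f a <= g a) by (apply H; auto).
  assert (fold_right Rplus 0 (map f l) <= fold_right Rplus 0 (map g l))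
    by (apply IH; intros; apply H; auto). lra.
Qed.

Lemma sumE_le m f g : (forall i, (i < m)%nat -> f i <= g i) -> sumE m f <= sumE m g.
Proof.
  intros H; unfold sumE; apply sumL_le; intros i Hi; apply in_seq in Hi; apply H; lia.
Qed.

Lemma sumL_lin (l : list nat) (f g : nat -> R) a b :
  fold_right Rplus 0 (map (fun i => a * f i + b * g i) l) =
  a * fold_right Rplus 0 (map f l) + b * fold_right Rplus 0 (map g l).
Proof. induction l; simpl; [ring|rewrite IHl; ring]. Qed.

Lemma sumE_lin m f g a b :
  sumE m (fun i => a * f i + b * g i) = a * sumE m f + b * sumE m g.
Proof. apply sumL_lin. Qed.

Lemma sumE_ext m f g : (forall i, f i = g i) -> sumE m f = sumE m g.
Proof.
  intros H; unfold sumE; f_equal; apply map_ext; auto.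
Qed.

Lemma sumL_const (l : list nat) c : fold_right Rplus 0 (map (fun _ => c) l) = INR (length l) * c.
Proof. induction l; simpl length; [simpl; ring|rewrite S_INR; simpl; rewrite IHl; ring]. Qed.

Lemma sumE_const m c : sumE m (fun _ => c) = INR m * c.
Proof. unfold sumE; rewrite sumL_const, length_seq; auto. Qed.

Lemma sumE_nonneg m f : (forall i, (i < m)%nat -> 0 <= f i) -> 0 <= sumE m f.
Proof.
  intros H. replace 0 with (sumE m (fun _ => 0)).
  apply sumE_le; auto. rewrite sumE_const; ring.
Qed.

Theorem lemma5p4
  (n m : nat) (tl hd : nat -> nat) (s t : nat)
  (Htl : forall i, (i < m)%nat -> (tl i < n)%nat)
  (Hhd : forall i, (i < m)%nat -> (hd i < n)%nat)
  (Hs : (s < n)%nat) (Ht : (t < n)%nat) (Hst : s <> t)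
  (u w : nat -> R)
  (Hu : forall i, (i < m)%nat -> 0 < u i)
  (Hw : forall i, (i < m)%nat -> 0 < w i)
  (eps rho F : R)
  (Heps0 : 0 < eps) (Heps1 : eps < 1/7) (Hrho : 0 < rho) (HF : 0 < F)
  (Reff : R)
  (HReff : is_Reff n m tl hd s t (fun i => w i / (u i)^2) Reff)
  (HR : Reff <= (1 - 7*eps) * sumE m w / F^2)
  (ft : nat -> R)
  (Hft : is_st_flow n m tl hd s t ft F)
  (HE : energy m (fun i => w i / (u i)^2) ft <= (1 + eps^2) * F^2 * Reff) :
  let mu := sumE m w in
  let w' := fun i => w i + eps / rho * cong u ft i * w i
                     + eps^2 / (INR m * rho) * mu in
  sumE m w' <= mu * exp (eps * (1 - 2*eps) / rho).
Proof.
  intros mu w'.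
  set (c := 1 - 3*eps).
  assert (Hc : 0 < c) by (unfold c; lra).
  assert (Hmu : 0 <= mu) by (apply sumE_nonneg; intros; apply Rlt_le; auto).
  set (S := sumE m (fun i => cong u ft i * w i)).
  set (E := energy m (fun i => w i / (u i)^2) ft).
  assert (HS : S <= (c * mu + E / c) / 2).
  { unfold S, E, energy.
    replace ((c * mu + sumE m (fun i => w i / u i ^ 2 * ft i ^ 2) / c) / 2)
      with (sumE m (fun i => (c/2) * w i + (1/(2*c)) * (w i / u i ^ 2 * ft i ^ 2)))
      by (rewrite sumE_lin; unfold mu; field; lra).
    apply sumE_le; intros i Hi.
    pose proof (Hu i Hi); pose proof (Hw i Hi).
    unfold cong. set (x := Rabs (ft i) / u i).
    assert (Hx : w i / u i ^ 2 * ft i ^ 2 = w i * x^2).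
    { unfold x. rewrite <- (pow2_abs (ft i)). field. lra. }
    rewrite Hx.
    assert (0 <= w i * (c - x)^2) by (apply Rmult_le_pos; [lra|apply pow2_ge_0]).
    apply Rmult_le_reg_l with (2*c); [lra|].
    replace (2 * c * (c / 2 * w i + 1 / (2 * c) * (w i * x ^ 2))) with (c*c*w i + w i * x^2)
      by (field; lra).
    nra. }
  assert (HE2 : E <= (1+eps^2)*(1-7*eps) * mu).
  { assert (F^2 > 0) by (apply pow_lt; lra).
    assert (F^2 * Reff <= (1 - 7*eps) * mu).
    { apply Rmult_le_reg_l with (/ F^2). apply Rinv_0_lt_compat; lra.
      replace (/ F^2 * (F^2 * Reff)) with Reff by (field; lra).
      unfold mu. replace (/ F ^ 2 * ((1 - 7 * eps) * sumE m w)) with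
        ((1 - 7 * eps) * sumE m w / F ^ 2) by (field; lra). exact HR. }
    unfold E. eapply Rle_trans; [exact HE|].
    rewrite Rmult_assoc. rewrite (Rmult_assoc (1+eps^2)).
    apply Rmult_le_compat_l; [nra|lra]. }
  assert (HS2 : S <= c * mu).
  { assert (E / c <= c * mu).
    { apply Rmult_le_reg_l with c; [lra|].
      replace (c * (E / c)) with E by (field; lra).
      eapply Rle_trans; [exact HE2|]. unfold c.
      assert (0 <= eps + 8*eps^2 + 7*eps^3) by nra.
      rewrite <- Rmult_assoc. apply Rmult_le_compat_r; [lra|nra]. }
    lra. }
  destruct (Nat.eq_dec m 0) as [Hm0|Hm0].
  { subst m. unfold w', mu, sumE. simpl. lra. }
  assert (HmR : 0 < INR m) by (apply lt_0_INR; lia).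
  assert (Hw' : sumE m w' = mu + eps/rho * S + eps^2/rho * mu).
  { unfold w'.
    transitivity (sumE m (fun i => 1 * (w i + eps / rho * (cong u ft i * w i))
                                   + (eps ^ 2 / (INR m * rho) * mu) * 1)).
    { apply sumE_ext; intros; ring. }
    rewrite sumE_lin, sumE_const.
    transitivity (sumE m (fun i => 1 * w i + (eps/rho) * (cong u ft i * w i))
      + eps ^ 2 / (INR m * rho) * mu * (INR m * 1)).
    { rewrite Rmult_1_l. f_equal. apply sumE_ext; intros; ring. }
    rewrite sumE_lin. unfold mu, S. field. lra. }
  rewrite Hw'.
  eapply Rle_trans with (mu * (1 + eps * (1 - 2 * eps) / rho)).
  { assert (eps / rho * S <= eps/rho * (c * mu)).
    { apply Rmult_le_compat_l; [apply Rlt_le; unfold Rdiv; apply Rmult_lt_0_compat;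
        [lra|apply Rinv_0_lt_compat; lra]|exact HS2]. }
    replace (mu * (1 + eps * (1 - 2 * eps) / rho)) with
      (mu + eps/rho * (c*mu) + eps^2/rho*mu) by (unfold c; field; lra).
    lra. }
  apply Rmult_le_compat_l; [exact Hmu|apply exp_ineq1_le].
Qed.
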